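(* Let $\mathbb C$ be a pointed category with finite limits and finite colimits. The forgetful functor $\mathsf{MCS}_W(\mathbb C)\to\mathsf{CS}_W(\mathbb C)$ has a left adjoint, which sends a weighted cospan $C=(A,X,x,Y,y,W,w)$ to $((\tilde C,X,\nu_Cx,Y,\nu_Cy,W,\nu_Cw),\mu_C)$, where $$\begin{array}{ccc} W+X+Y & \xrightarrow{[w,x,y]} & A\\ \downarrow{\scriptstyle\langle [\iota_1,\iota_2,0],[\iota_1,0,\iota_2]\rangle} & & \downarrow{\scriptstyle \nu_C}\\ (W+X)\times_W(W+Y) & \xrightarrow{\mu_C} & \tilde C\end{array}$$ is a pushout; the $C$-component of the unit of the adjunction consists of the identity morphisms of $X$, $Y$, $W$ and the morphism $\nu_C\colon A\to\tilde C$.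
   Context: Notation: $\iota_i$ coproduct injections, $[a,b]$, $[a,b,c]$ copairings, $\langle a,b\rangle$ pairing; $(W+X)\times_W(W+Y)$ is the pullback of $[1,0]\colon W+X\to W$ and $[1,0]\colon W+Y\to W$. A weighted cospan $(A,X,x,Y,y,W,w)$ consists of morphisms $w\colon W\to A$, $x\colon X\to A$, $y\colon Y\to A$; a morphism of weighted cospans $(A,X,x,Y,y,W,w)\to(A',X',x',Y',y',W',w')$ is a quadruple of morphisms $a\colon A\to A'$, $f\colon X\to X'$, $g\colon Y\to Y'$, $h\colon W\to W'$ with $af=$ ... precisely $x'f=ax$, $y'g=ay$, $w'h=aw$; these form the category $\mathsf{CS}_W(\mathbb C)$. An internal multiplication $X\times Y\to A$ over $(W,w)$ is a morphism $m\colon (W+X)\times_W(W+Y)\to A$ with $m\langle 1,\iota_1[1,0]\rangle=[w,x]$ and $m\langle \iota_1[1,0],1\rangle=[w,y]$. A multiplicative weighted cospan is a pair $(C,m)$ with $C$ a weighted cospan and $m$ such an internal multiplication; a morphism $(C,m)\to(C',m')$ is a morphism $(a,f,g,h)$ of weighted cospans with $am=m'\circ((h+f)\times_h(h+g))$. These form the category $\mathsf{MCS}_W(\mathbb C)$, with the forgetful functor $(C,m)\mapsto C$. *)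

(* Defs.v *)
Set Implicit Arguments.
Unset Strict Implicit.

Record Cat := {
  ob :> Type;
  hom : ob -> ob -> Type;
  comp : forall a b c, hom b c -> hom a b -> hom a c;
  idm : forall a, hom a a;
  comp_assoc : forall a b c d (h : hom c d) (g : hom b c) (f : hom a b),
      comp h (comp g f) = comp (comp h g) f;
  comp_id_l : forall a b (f : hom a b), comp (idm b) f = f;
  comp_id_r : forall a b (f : hom a b), comp f (idm a) = f
}.
Arguments hom {c0} _ _.
Arguments comp {c0 a b c} _ _.
Arguments idm {c0} _.
Notation "g ∘ f" := (comp g f) (at level 40, left associativity).

Definition is_pushout (C : Cat) (a b c p : C) (f : hom c a) (g : hom c b)
  (i1 : hom a p) (i2 : hom b p) : Prop :=
  i1 ∘ f = i2 ∘ g /\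
  forall (t : C) (u : hom a t) (v : hom b t), u ∘ f = v ∘ g ->
    exists! r : hom p t, r ∘ i1 = u /\ r ∘ i2 = v.

(* A pointed category with finite limits and finite colimits:
   a zero object, chosen binary coproducts, chosen pullbacks (these, with the
   zero object as terminal object, give all finite limits) and pushouts (these,
   with the zero object as initial object, give all finite colimits).
   The pullback pairing is given as a total operation, specified on
   compatible pairs (where it is the usual pairing <u,v>). *)
Record PFLC (C : Cat) := {
  zo : C;
  to_zo : forall a : C, hom a zo;
  to_zo_uniq : forall (a : C) (f : hom a zo), f = to_zo a;
  from_zo : forall a : C, hom zo a;
  from_zo_uniq : forall (a : C) (f : hom zo a), f = from_zo a;
  cp : C -> C -> C;
  in1 : forall a b : C, hom a (cp a b);
  in2 : forall a b : C, hom b (cp a b);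
  copair : forall (a b c : C), hom a c -> hom b c -> hom (cp a b) c;
  copair_in1 : forall (a b c : C) (f : hom a c) (g : hom b c),
      copair f g ∘ in1 a b = f;
  copair_in2 : forall (a b c : C) (f : hom a c) (g : hom b c),
      copair f g ∘ in2 a b = g;
  copair_uniq : forall (a b c : C) (f : hom a c) (g : hom b c) (h : hom (cp a b) c),
      h ∘ in1 a b = f -> h ∘ in2 a b = g -> h = copair f g;
  pb : forall (a b c : C), hom a c -> hom b c -> C;
  pr1 : forall (a b c : C) (f : hom a c) (g : hom b c), hom (pb f g) a;
  pr2 : forall (a b c : C) (f : hom a c) (g : hom b c), hom (pb f g) b;
  pb_comm : forall (a b c : C) (f : hom a c) (g : hom b c),
      f ∘ pr1 f g = g ∘ pr2 f g;
  pair : forall (a b c : C) (f : hom a c) (g : hom b c) (t : C),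
      hom t a -> hom t b -> hom t (pb f g);
  pair_pr1 : forall (a b c : C) (f : hom a c) (g : hom b c) (t : C)
      (u : hom t a) (v : hom t b), f ∘ u = g ∘ v -> pr1 f g ∘ pair f g u v = u;
  pair_pr2 : forall (a b c : C) (f : hom a c) (g : hom b c) (t : C)
      (u : hom t a) (v : hom t b), f ∘ u = g ∘ v -> pr2 f g ∘ pair f g u v = v;
  pair_uniq : forall (a b c : C) (f : hom a c) (g : hom b c) (t : C)
      (u : hom t a) (v : hom t b) (k : hom t (pb f g)),
      f ∘ u = g ∘ v -> pr1 f g ∘ k = u -> pr2 f g ∘ k = v -> k = pair f g u v;
  has_pushouts : forall (a b c : C) (f : hom c a) (g : hom c b),
      exists (p : C) (i1 : hom a p) (i2 : hom b p), is_pushout f g i1 i2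
}.
Arguments zo {C} K : rename.
Arguments to_zo {C} K a : rename.
Arguments from_zo {C} K a : rename.
Arguments cp {C} K a b : rename.
Arguments in1 {C} K a b : rename.
Arguments in2 {C} K a b : rename.
Arguments copair {C} K {a b c} f g : rename.
Arguments pb {C} K {a b c} f g : rename.
Arguments pr1 {C} K {a b c} f g : rename.
Arguments pr2 {C} K {a b c} f g : rename.
Arguments pair {C} K {a b c} f g {t} u v : rename.

Section WCS.
Context {C : Cat} (K : PFLC C).

Definition zm (a b : C) : hom a b := from_zo K b ∘ to_zo K a.

Definition codiag (W X : C) : hom (cp K W X) W := copair K (idm W) (zm X W).

Definition PBo (W X Y : C) : C := pb K (codiag W X) (codiag W Y).
Definition PBpair (W X Y t : C) (u : hom t (cp K W X)) (v : hom t (cp K W Y))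
  : hom t (PBo W X Y) := pair K (codiag W X) (codiag W Y) u v.
Definition PBpr1 (W X Y : C) : hom (PBo W X Y) (cp K W X) :=
  pr1 K (codiag W X) (codiag W Y).
Definition PBpr2 (W X Y : C) : hom (PBo W X Y) (cp K W Y) :=
  pr2 K (codiag W X) (codiag W Y).

Definition cp3 (a b c : C) : C := cp K (cp K a b) c.
Definition in31 (a b c : C) : hom a (cp3 a b c) := in1 K (cp K a b) c ∘ in1 K a b.
Definition in32 (a b c : C) : hom b (cp3 a b c) := in1 K (cp K a b) c ∘ in2 K a b.
Definition in33 (a b c : C) : hom c (cp3 a b c) := in2 K (cp K a b) c.
Definition copair3 (a b c d : C) (f : hom a d) (g : hom b d) (h : hom c d)
  : hom (cp3 a b c) d := copair K (copair K f g) h.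

Definition sum_map (W X W' X' : C) (h : hom W W') (f : hom X X')
  : hom (cp K W X) (cp K W' X') := copair K (in1 K W' X' ∘ h) (in2 K W' X' ∘ f).

Definition pbmap (W X Y W' X' Y' : C) (h : hom W W') (f : hom X X') (g : hom Y Y')
  : hom (PBo W X Y) (PBo W' X' Y') :=
  PBpair (sum_map h f ∘ PBpr1 W X Y) (sum_map h g ∘ PBpr2 W X Y).

Definition sqL (W X Y : C) : hom (cp3 W X Y) (PBo W X Y) :=
  PBpair (copair3 (in1 K W X) (in2 K W X) (zm Y (cp K W X)))
         (copair3 (in1 K W Y) (zm X (cp K W Y)) (in2 K W Y)).

End WCS.

Record wcs (C : Cat) := {
  cA : C; cX : C; cx : hom cX cA; cY : C; cy : hom cY cA; cW : C; cw : hom cW cA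
}.

Record wcs_hom (C : Cat) (D E : wcs C) := {
  ha : hom (cA D) (cA E);
  hf : hom (cX D) (cX E);
  hg : hom (cY D) (cY E);
  hh : hom (cW D) (cW E);
  hx : cx E ∘ hf = ha ∘ cx D;
  hy : cy E ∘ hg = ha ∘ cy D;
  hw : cw E ∘ hh = ha ∘ cw D
}.

Lemma comp_sq (C : Cat) (a b a' b' a'' b'' : C) (x : hom a b) (x' : hom a' b')
  (f1 : hom a a') (a1 : hom b b') (x'' : hom a'' b'') (f2 : hom a' a'') (a2 : hom b' b'') :
  x' ∘ f1 = a1 ∘ x -> x'' ∘ f2 = a2 ∘ x' -> x'' ∘ (f2 ∘ f1) = (a2 ∘ a1) ∘ x.
Proof.
  intros H1 H2. rewrite comp_assoc, H2, <- comp_assoc, H1, comp_assoc. reflexivity.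
Qed.

Definition wcs_comp (C : Cat) (D E F : wcs C) (v : wcs_hom E F) (u : wcs_hom D E)
  : wcs_hom D F :=
  {| ha := ha v ∘ ha u; hf := hf v ∘ hf u; hg := hg v ∘ hg u; hh := hh v ∘ hh u;
     hx := comp_sq (hx u) (hx v); hy := comp_sq (hy u) (hy v);
     hw := comp_sq (hw u) (hw v) |}.

Arguments PBpair {C} K {W X Y t} u v.
Section MCS.
Context {C : Cat} (K : PFLC C).

Definition is_mult (D : wcs C) (m : hom (PBo K (cW D) (cX D) (cY D)) (cA D)) : Prop :=
  m ∘ PBpair K (idm (cp K (cW D) (cX D)))
               (in1 K (cW D) (cY D) ∘ codiag K (cW D) (cX D))
    = copair K (cw D) (cx D) /\
  m ∘ PBpair K (in1 K (cW D) (cX D) ∘ codiag K (cW D) (cY D))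
               (idm (cp K (cW D) (cY D)))
    = copair K (cw D) (cy D).

Record mcs := {
  mc : wcs C;
  mm : hom (PBo K (cW mc) (cX mc) (cY mc)) (cA mc);
  mok : @is_mult mc mm
}.

Record mcs_hom (M N : mcs) := {
  mw : wcs_hom (mc M) (mc N);
  mcomm : ha mw ∘ mm M = mm N ∘ pbmap K (hh mw) (hf mw) (hg mw)
}.

End MCS.
Arguments is_mult {C} K D m.
Arguments mcs {C} K.
Arguments Build_mcs {C K mc mm} mok.
Arguments mcs_hom {C K} M N.
Arguments mw {C K M N} m.

(* Main.v *)
Require Import Defs.
From Stdlib Require Import ProofIrrelevance.

Section H.
Context {C : Cat} (K : PFLC C).

Lemma cA_ (a b c d : C) (h : hom c d) (g : hom b c) (f : hom a b) :
  h ∘ (g ∘ f) = (h ∘ g) ∘ f.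
Proof. apply comp_assoc. Qed.

Lemma assoc4 (a b c d e : C) (p : hom d e) (q : hom c d) (r : hom b c) (t : hom a b) :
  (p ∘ q) ∘ (r ∘ t) = p ∘ ((q ∘ r) ∘ t).
Proof. rewrite !cA_. reflexivity. Qed.

Lemma copair_comp (a b c d : C) (f : hom a c) (g : hom b c) (h : hom c d) :
  h ∘ copair K f g = copair K (h ∘ f) (h ∘ g).
Proof. apply copair_uniq; rewrite <- cA_; [rewrite copair_in1|rewrite copair_in2]; auto. Qed.

Lemma cp_ext (a b c : C) (f g : hom (cp K a b) c) :
  f ∘ in1 K a b = g ∘ in1 K a b -> f ∘ in2 K a b = g ∘ in2 K a b -> f = g.
Proof.
  intros H1 H2. rewrite (copair_uniq H1 H2). symmetry. apply copair_uniq; reflexivity.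
Qed.

Lemma cp3_ext (a b c d : C) (f g : hom (cp3 K a b c) d) :
  f ∘ in31 K a b c = g ∘ in31 K a b c -> f ∘ in32 K a b c = g ∘ in32 K a b c ->
  f ∘ in33 K a b c = g ∘ in33 K a b c -> f = g.
Proof.
  unfold in31, in32, in33. intros H1 H2 H3. apply cp_ext; auto.
  apply cp_ext; rewrite <- !cA_; auto.
Qed.

Lemma c3_1 (a b c d : C) (f : hom a d) (g : hom b d) (h : hom c d) :
  copair3 K f g h ∘ in31 K a b c = f.
Proof. unfold copair3, in31. rewrite cA_, !copair_in1. reflexivity. Qed.
Lemma c3_2 (a b c d : C) (f : hom a d) (g : hom b d) (h : hom c d) :
  copair3 K f g h ∘ in32 K a b c = g.
Proof. unfold copair3, in32. rewrite cA_. rewrite copair_in1, copair_in2. reflexivity. Qed.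
Lemma c3_3 (a b c d : C) (f : hom a d) (g : hom b d) (h : hom c d) :
  copair3 K f g h ∘ in33 K a b c = h.
Proof. unfold copair3, in33. apply copair_in2. Qed.

Lemma zm_l (a b c : C) (h : hom b c) : h ∘ zm K a b = zm K a c.
Proof. unfold zm. rewrite cA_. f_equal. rewrite (from_zo_uniq (h ∘ _)). reflexivity. Qed.
Lemma zm_r (a b c : C) (h : hom a b) : zm K b c ∘ h = zm K a c.
Proof. unfold zm. rewrite <- cA_. f_equal. rewrite (to_zo_uniq (_ ∘ h)). reflexivity. Qed.

Lemma codiag_1 (W X : C) : codiag K W X ∘ in1 K W X = idm W.
Proof. apply copair_in1. Qed.
Lemma codiag_2 (W X : C) : codiag K W X ∘ in2 K W X = zm K X W.
Proof. apply copair_in2. Qed.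

Lemma pb_ext (a b c t : C) (f : hom a c) (g : hom b c) (k l : hom t (pb K f g)) :
  pr1 K f g ∘ k = pr1 K f g ∘ l -> pr2 K f g ∘ k = pr2 K f g ∘ l -> k = l.
Proof.
  intros H1 H2.
  assert (E : f ∘ (pr1 K f g ∘ l) = g ∘ (pr2 K f g ∘ l)) by (rewrite !cA_, pb_comm; reflexivity).
  rewrite (pair_uniq E H1 H2). symmetry. apply pair_uniq; auto.
Qed.

Lemma pair_comp (a b c t s : C) (f : hom a c) (g : hom b c) (u : hom t a) (v : hom t b)
  (k : hom s t) : f ∘ u = g ∘ v -> pair K f g u v ∘ k = pair K f g (u ∘ k) (v ∘ k).
Proof.
  intro E. apply pair_uniq.
  - rewrite !cA_, E. reflexivity.
  - rewrite cA_, pair_pr1; auto.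
  - rewrite cA_, pair_pr2; auto.
Qed.


Lemma c3_in1 (a b c d : C) (f : hom a d) (g : hom b d) (h : hom c d) :
  copair3 K f g h ∘ in1 K (cp K a b) c = copair K f g.
Proof. unfold copair3. apply copair_in1. Qed.

Lemma copair_id (a b : C) : copair K (in1 K a b) (in2 K a b) = idm _.
Proof. symmetry. apply copair_uniq; apply comp_id_l. Qed.

Lemma in1_codiag (W X Y : C) : in1 K W Y ∘ codiag K W X = copair K (in1 K W Y) (zm K X _).
Proof. unfold codiag. rewrite copair_comp, comp_id_r, zm_l. reflexivity. Qed.

Lemma PBpair_comp (W X Y t s : C) (u : hom t (cp K W X)) (v : hom t (cp K W Y)) (k : hom s t) :
  codiag K W X ∘ u = codiag K W Y ∘ v -> PBpair K u v ∘ k = PBpair K (u ∘ k) (v ∘ k).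
Proof. intro E. unfold PBpair. apply pair_comp. exact E. Qed.

Lemma PBpair_pr1 (W X Y t : C) (u : hom t (cp K W X)) (v : hom t (cp K W Y)) :
  codiag K W X ∘ u = codiag K W Y ∘ v -> PBpr1 K W X Y ∘ PBpair K u v = u.
Proof. intro E. unfold PBpair, PBpr1. apply pair_pr1. exact E. Qed.
Lemma PBpair_pr2 (W X Y t : C) (u : hom t (cp K W X)) (v : hom t (cp K W Y)) :
  codiag K W X ∘ u = codiag K W Y ∘ v -> PBpr2 K W X Y ∘ PBpair K u v = v.
Proof. intro E. unfold PBpair, PBpr2. apply pair_pr2. exact E. Qed.

Lemma sqL_compat (W X Y : C) :
  codiag K W X ∘ copair3 K (in1 K W X) (in2 K W X) (zm K Y (cp K W X)) =
  codiag K W Y ∘ copair3 K (in1 K W Y) (zm K X (cp K W Y)) (in2 K W Y).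
Proof.
  apply cp3_ext; rewrite <- !cA_, ?c3_1, ?c3_2, ?c3_3, ?codiag_1, ?codiag_2, ?zm_l; reflexivity.
Qed.

Lemma sqL_in1 (W X Y : C) :
  sqL K W X Y ∘ in1 K (cp K W X) Y = PBpair K (idm (cp K W X)) (in1 K W Y ∘ codiag K W X).
Proof.
  unfold sqL. rewrite PBpair_comp by apply sqL_compat.
  rewrite !c3_in1, copair_id, in1_codiag. reflexivity.
Qed.

Lemma sqL_in2 (W X Y : C) :
  sqL K W X Y ∘ copair K (in31 K W X Y) (in33 K W X Y)
  = PBpair K (in1 K W X ∘ codiag K W Y) (idm (cp K W Y)).
Proof.
  unfold sqL. rewrite PBpair_comp by apply sqL_compat.
  rewrite !copair_comp, !c3_1, !c3_3, copair_id, in1_codiag. reflexivity.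
Qed.

Lemma wcs_hom_eq (D E : wcs C) (u v : wcs_hom D E) :
  ha u = ha v -> hf u = hf v -> hg u = hg v -> hh u = hh v -> u = v.
Proof.
  destruct u, v; simpl; intros; subst; f_equal; apply proof_irrelevance.
Qed.

Lemma mcs_hom_eq (M N : mcs K) (u v : mcs_hom M N) : mw u = mw v -> u = v.
Proof.
  destruct u, v; simpl; intros; subst; f_equal; apply proof_irrelevance.
Qed.


Lemma sum_map_in1 (W X W' X' : C) (h : hom W W') (f : hom X X') :
  sum_map K h f ∘ in1 K W X = in1 K W' X' ∘ h.
Proof. apply copair_in1. Qed.
Lemma sum_map_in2 (W X W' X' : C) (h : hom W W') (f : hom X X') :
  sum_map K h f ∘ in2 K W X = in2 K W' X' ∘ f.
Proof. apply copair_in2. Qed.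

Lemma codiag_sum (W X W' X' : C) (h : hom W W') (f : hom X X') :
  codiag K W' X' ∘ sum_map K h f = h ∘ codiag K W X.
Proof.
  apply cp_ext; rewrite <- !cA_, ?sum_map_in1, ?sum_map_in2, ?codiag_1, ?codiag_2;
  rewrite ?cA_, ?codiag_1, ?codiag_2, ?comp_id_l, ?comp_id_r, ?zm_l, ?zm_r; reflexivity.
Qed.

Lemma pbmap_compat (W X Y W' X' Y' : C) (h : hom W W') (f : hom X X') (g : hom Y Y') :
  codiag K W' X' ∘ (sum_map K h f ∘ PBpr1 K W X Y) = codiag K W' Y' ∘ (sum_map K h g ∘ PBpr2 K W X Y).
Proof.
  rewrite !cA_, !codiag_sum, <- !cA_. f_equal. unfold PBpr1, PBpr2. apply pb_comm.
Qed.

Lemma pbmap_pair (W X Y W' X' Y' t : C) (h : hom W W') (f : hom X X') (g : hom Y Y')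
  (u : hom t (cp K W X)) (v : hom t (cp K W Y)) :
  codiag K W X ∘ u = codiag K W Y ∘ v ->
  pbmap K h f g ∘ PBpair K u v = PBpair K (sum_map K h f ∘ u) (sum_map K h g ∘ v).
Proof.
  intro E. unfold pbmap. rewrite PBpair_comp by apply pbmap_compat.
  rewrite <- !cA_, PBpair_pr1, PBpair_pr2 by exact E. reflexivity.
Qed.

Lemma key (D D' : wcs C) (m : hom (PBo K (cW D') (cX D') (cY D')) (cA D'))
  (Hm : is_mult K D' m) (u : wcs_hom D D') :
  m ∘ pbmap K (hh u) (hf u) (hg u) ∘ sqL K (cW D) (cX D) (cY D)
  = ha u ∘ copair3 K (cw D) (cx D) (cy D).
Proof.
  destruct Hm as [M1 M2].
  apply cp3_ext; rewrite <- !cA_; unfold sqL;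
  (rewrite PBpair_comp by apply sqL_compat);
  rewrite ?c3_1, ?c3_2, ?c3_3.
  - rewrite pbmap_pair by (rewrite !codiag_1; reflexivity).
    rewrite !sum_map_in1.
    transitivity (m ∘ (PBpair K (idm _) (in1 K _ _ ∘ codiag K _ _) ∘ (in1 K (cW D') (cX D') ∘ hh u))).
    + f_equal. rewrite PBpair_comp by (rewrite cA_, codiag_1, comp_id_l, comp_id_r; reflexivity).
      rewrite comp_id_l, assoc4, codiag_1, comp_id_l.
      reflexivity.
    + rewrite cA_, M1, cA_, copair_in1. apply hw.
  - rewrite pbmap_pair by (rewrite codiag_2, zm_l; reflexivity).
    rewrite sum_map_in2, zm_l.
    transitivity (m ∘ (PBpair K (idm _) (in1 K _ _ ∘ codiag K _ _) ∘ (in2 K (cW D') (cX D') ∘ hf u))).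
    + f_equal. rewrite PBpair_comp by (rewrite cA_, codiag_1, comp_id_l, comp_id_r; reflexivity).
      rewrite comp_id_l, assoc4, codiag_2, zm_r, zm_l.
      reflexivity.
    + rewrite cA_, M1, cA_, copair_in2. apply hx.
  - rewrite pbmap_pair by (rewrite codiag_2, zm_l; reflexivity).
    rewrite sum_map_in2, zm_l.
    transitivity (m ∘ (PBpair K (in1 K _ _ ∘ codiag K _ _) (idm _) ∘ (in2 K (cW D') (cY D') ∘ hg u))).
    + f_equal. rewrite PBpair_comp by (rewrite cA_, codiag_1, comp_id_l, comp_id_r; reflexivity).
      rewrite comp_id_l, assoc4, codiag_2, zm_r, zm_l.
      reflexivity.
    + rewrite cA_, M2, cA_, copair_in2. apply hy.
Qed.

End H.

Theorem theorem3p1 (C : Cat) (K : PFLC C) (D : wcs C) (Ct : C)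
  (nu : hom (cA D) Ct) (mu : hom (PBo K (cW D) (cX D) (cY D)) Ct) :
  is_pushout (sqL K (cW D) (cX D) (cY D)) (copair3 K (cw D) (cx D) (cy D)) mu nu ->
  let Dt : wcs C := {| cA := Ct; cX := cX D; cx := nu ∘ cx D;
                       cY := cY D; cy := nu ∘ cy D;
                       cW := cW D; cw := nu ∘ cw D |} in
  exists (Hm : is_mult K Dt mu) (eta : wcs_hom D Dt),
    ha eta = nu /\ hf eta = idm (cX D) /\ hg eta = idm (cY D) /\ hh eta = idm (cW D) /\
    forall (M : mcs K) (u : wcs_hom D (mc M)),
      exists! v : mcs_hom (Build_mcs Hm) M, wcs_comp (mw v) eta = u.
Proof.
  intros [Heq Huniv] Dt.
  assert (Hm : is_mult K Dt mu).
  { split; simpl.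
    - rewrite <- sqL_in1, cA_, Heq, <- cA_, c3_in1, copair_comp. reflexivity.
    - rewrite <- sqL_in2, cA_, Heq, <- cA_, copair_comp, c3_1, c3_3, copair_comp.
      reflexivity. }
  exists Hm.
  unshelve eexists (@Build_wcs_hom C D Dt nu (idm _) (idm _) (idm _) _ _ _);
    simpl; try (rewrite comp_id_r; reflexivity).
  split; [reflexivity|]. split; [reflexivity|]. split; [reflexivity|]. split; [reflexivity|].
  intros [D' m mok] u. simpl in *.
  pose proof (@key C K D D' m mok u) as H.
  destruct (Huniv _ _ _ H) as [r [[Hr1 Hr2] Hru]].
  assert (Ex : cx D' ∘ hf u = r ∘ (nu ∘ cx D)) by (rewrite cA_, Hr2; apply hx).
  assert (Ey : cy D' ∘ hg u = r ∘ (nu ∘ cy D)) by (rewrite cA_, Hr2; apply hy).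
  assert (Ew : cw D' ∘ hh u = r ∘ (nu ∘ cw D)) by (rewrite cA_, Hr2; apply hw).
  pose (w0 := @Build_wcs_hom C Dt D' r (hf u) (hg u) (hh u) Ex Ey Ew).
  exists (@Build_mcs_hom C K (Build_mcs Hm) (Build_mcs mok) w0 Hr1).
  split.
  - apply wcs_hom_eq; simpl; rewrite ?comp_id_r; auto.
  - intros v' Hv'. apply mcs_hom_eq. simpl.
    assert (Ea := f_equal (@ha C D D') Hv').
    assert (Ef := f_equal (@hf C D D') Hv').
    assert (Eg := f_equal (@hg C D D') Hv').
    assert (Eh := f_equal (@hh C D D') Hv').
    simpl in Ea, Ef, Eg, Eh. rewrite comp_id_r in Ef, Eg, Eh.
    apply wcs_hom_eq; simpl; auto.
    apply Hru. split; auto.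
    pose proof (mcomm v') as Hc. simpl in Hc. rewrite Hc, Ef, Eg, Eh. reflexivity.
Qed.
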